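(* Let $k$ be a field, let $\mathsf{E}$ be a locally finite $k$-linear category, and let $M$ be a locally finite left $\mathsf{E}$-module. Then $M$ is isomorphic to $\Upsilon_\mathsf{E}(\mathcal{M})$ for some (locally finite) left $\mathcal{C}_\mathsf{E}$-comodule $\mathcal{M}$ if and only if, for every object $x\in\mathsf{E}$, the set of all objects $y\in\mathsf{E}$ for which the action map $\operatorname{Hom}_\mathsf{E}(x,y)\otimes_kM(x)\to M(y)$ is nonzero is finite.
   Context: A small $k$-linear category $\mathsf{E}$ has $k$-vector spaces $\operatorname{Hom}_\mathsf{E}(x,y)$, $k$-bilinear associative composition and identities, with $\mathrm{id}_x\neq0$ for all objects $x$. A left $\mathsf{E}$-module is a $k$-linear functor $M:\mathsf{E}\to k\text{-Vect}$ (spaces $M(x)$, action maps $\operatorname{Hom}_\mathsf{E}(x,y)\otimes_kM(x)\to M(y)$); it is locally finite if every $M(x)$ is finite-dimensional. Write $x\preceq y$ if there are $n\ge1$ and objects $x=z_0,\dots,z_n=y$ with $\operatorname{Hom}_\mathsf{E}(z_{i-1},z_i)\neq0$ for all $i$. $\mathsf{E}$ is locally finite if all $\operatorname{Hom}_\mathsf{E}(x,y)$ are finite-dimensional and every set $\{z:x\preceq z\preceq y\}$ is finite. $\mathcal{C}_\mathsf{E}=\bigoplus_{x,y}\mathcal{C}^{x,y}$, $\mathcal{C}^{x,y}=\operatorname{Hom}_\mathsf{E}(x,y)^*$; counit zero on $\mathcal{C}^{x,y}$ for $x\ne y$ and evaluation at $\mathrm{id}_x$ on $\mathcal{C}^{x,x}$;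 comultiplication $\mathcal{C}^{x,y}\to\bigoplus_z\mathcal{C}^{x,z}\otimes\mathcal{C}^{z,y}$ with components dual to composition $\operatorname{Hom}_\mathsf{E}(x,z)\otimes\operatorname{Hom}_\mathsf{E}(z,y)\to\operatorname{Hom}_\mathsf{E}(x,y)$, $g\otimes h\mapsto hg$. For a left $\mathcal{C}_\mathsf{E}$-comodule $(\mathcal{M},\nu:\mathcal{M}\to\mathcal{C}_\mathsf{E}\otimes\mathcal{M})$ and $\varphi\in\mathcal{C}_\mathsf{E}^*$ set $\varphi\cdot m=(\varphi\otimes\mathrm{id})\nu(m)$. Let $e_x\in\mathcal{C}_\mathsf{E}^*$ be evaluation at $\mathrm{id}_x$ on $\mathcal{C}^{x,x}$ and zero elsewhere; for $f\in\operatorname{Hom}_\mathsf{E}(x,y)$ let $\mathrm{ev}_f$ be evaluation at $f$ on $\mathcal{C}^{x,y}$ and zero elsewhere. The comodule inclusion functor $\Upsilon_\mathsf{E}$ sends $\mathcal{M}$ to the left $\mathsf{E}$-module with $\Upsilon_\mathsf{E}(\mathcal{M})(x)=e_x\cdot\mathcal{M}$ (one has $\mathcal{M}=\bigoplus_xe_x\cdot\mathcal{M}$), $f\in\operatorname{Hom}_\mathsf{E}(x,y)$ acting by $m\mapsto\mathrm{ev}_f\cdot m\in e_y\cdot\mathcal{M}$; on morphisms it takes restrictions. A comodule $\mathcal{M}$ is locally finite if $\Upsilon_\mathsf{E}(\mathcal{M})$ is. *)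

(* Defs.v *)
From HB Require Import structures.
From mathcomp Require Import all_boot all_algebra.
From Stdlib Require List.

Set Implicit Arguments.
Unset Strict Implicit.
Unset Printing Implicit Defensive.

Import GRing.Theory.
Local Open Scope ring_scope.

(* Small k-linear categories whose HomE spaces are finite-dimensional   *)
(* (vectType k).  Finite-dimensionality of HomE spaces is the first half *)
(* of "locally finite"; the interval-finiteness half is [lf_cat] below. *)
Record klinCat (k : fieldType) := KLinCat {
  Obj : Type;
  HomE : Obj -> Obj -> vectType k;
  comp : forall x y z : Obj, HomE y z -> HomE x y -> HomE x z;
  idm : forall x : Obj, HomE x x;
  comp_linl : forall x y z (g : HomE x y) (a : k) (h1 h2 : HomE y z),
      comp (a *: h1 + h2) g = a *: comp h1 g + comp h2 g;
  comp_linr : forall x y z (h : HomE y z) (a : k) (g1 g2 : HomE x y),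
      comp h (a *: g1 + g2) = a *: comp h g1 + comp h g2;
  compA : forall w x y z (f : HomE w x) (g : HomE x y) (h : HomE y z),
      comp h (comp g f) = comp (comp h g) f;
  comp1l : forall x y (f : HomE x y), comp (idm y) f = f;
  comp1r : forall x y (f : HomE x y), comp f (idm x) = f;
  idm_neq0 : forall x, idm x != 0
}.

Arguments HomE {k} _ _ _.
Arguments comp {k} _ {x y z} _ _.
Arguments idm {k} _ _.

Inductive prec (k : fieldType) (E : klinCat k) (x : Obj E) : Obj E -> Prop :=
| prec1 y : (exists f : HomE E x y, f != 0) -> @prec k E x y
| precS y z : @prec k E x y -> (exists f : HomE E y z, f != 0) -> @prec k E x z.

Definition lf_cat (k : fieldType) (E : klinCat k) : Prop :=
  forall x y : Obj E, exists s : seq (Obj E),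
    forall z, prec x z -> prec z y -> List.In z s.

Record lfModule (k : fieldType) (E : klinCat k) := LFModule {
  Mob : Obj E -> vectType k;
  act : forall x y : Obj E, HomE E x y -> Mob x -> Mob y;
  act_linl : forall x y (v : Mob x) (a : k) (f1 f2 : HomE E x y),
      act (a *: f1 + f2) v = a *: act f1 v + act f2 v;
  act_linr : forall x y (f : HomE E x y) (a : k) (v1 v2 : Mob x),
      act f (a *: v1 + v2) = a *: act f v1 + act f v2;
  act_id : forall x (v : Mob x), act (idm E x) v = v;
  act_comp : forall x y z (g : HomE E x y) (h : HomE E y z) (v : Mob x),
      act (comp E h g) v = act h (act g v)
}.

Arguments act {k E} _ {x y} _ _.

(* Left C_E-comodules.  Since each HomE(x,y) is finite-dimensional,     *)
(*   C_E (x) V = (+)_{x,y} HomE(x,y)^* (x) V = (+)_{x,y} Lin(HomE(x,y),V) *)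
(* so a coaction nu : V -> C_E (x) V is recorded by its components     *)
(*   coact x y : V -> HomE(x,y) -> V,  coact x y m f = (ev_f (x) id) nu(m),*)
(* bilinear, with finite support in (x,y) for each m (direct sum).     *)
(* The counit and coassociativity axioms are written componentwise.    *)
Record comodule (k : fieldType) (E : klinCat k) := Comodule {
  Cv : lmodType k;
  coact : forall x y : Obj E, Cv -> HomE E x y -> Cv;
  coact_linl : forall x y (f : HomE E x y) (a : k) (m1 m2 : Cv),
      coact (a *: m1 + m2) f = a *: coact m1 f + coact m2 f;
  coact_linr : forall x y (m : Cv) (a : k) (f1 f2 : HomE E x y),
      coact m (a *: f1 + f2) = a *: coact m f1 + coact m f2;
  (* nu(m) lies in the direct sum: finitely many nonzero components *)
  coact_fin : forall m : Cv, exists s : seq (Obj E * Obj E),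
      forall x y (f : HomE E x y), coact m f != 0 -> List.In (x, y) s;
  (* counit: (eps (x) id) nu = id, i.e. m = sum_x coact x x m (id_x) *)
  coact_counit : forall m : Cv, exists xs : seq (Obj E),
      List.NoDup xs /\
      (forall x, coact m (idm E x) != 0 -> List.In x xs) /\
      m = \sum_(x <- xs) coact m (idm E x);
  (* coassociativity: (Delta (x) id) nu = (id (x) nu) nu, componentwise:
     component C^{x,z} (x) C^{z,y} (x) V ...                           *)
  coact_coassoc : forall x z y (m : Cv) (g : HomE E x z) (h : HomE E z y),
      coact (coact m g) h = coact m (comp E h g);
  (* ... and components C^{x,z} (x) C^{z',y} (x) V with z <> z' vanish *)
  coact_coassoc0 : forall x z z' y (m : Cv) (g : HomE E x z) (h : HomE E z' y),
      z <> z' -> coact (coact m g) h = 0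
}.

Arguments coact {k E} _ {x y} _ _.

Unset Implicit Arguments.
Definition e_act (k : fieldType) (E : klinCat k) (C : comodule E) (x : Obj E)
  (m : Cv C) : Cv C := coact C m (idm E x).
Arguments e_act {k E} C x m.
Definition ev_act (k : fieldType) (E : klinCat k) (C : comodule E) (x y : Obj E)
  (f : HomE E x y) (m : Cv C) : Cv C := coact C m f.
Arguments ev_act {k E} C {x y} f m.

Definition Ups_ob (k : fieldType) (E : klinCat k) (C : comodule E) (x : Obj E)
  (m : Cv C) : Prop := exists m' : Cv C, m = e_act C x m'.
Arguments Ups_ob {k E} C x m.

Definition iso_Ups (k : fieldType) (E : klinCat k) (M : lfModule E)
  (C : comodule E) : Prop :=
  exists phi : forall x : Obj E, Mob M x -> Cv C,
    (forall x (a : k) (u v : Mob M x), phi x (a *: u + v) = a *: phi x u + phi x v) /\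
    (forall x, injective (phi x)) /\
    (forall x (v : Mob M x), Ups_ob C x (phi x v)) /\
    (forall x (m : Cv C), Ups_ob C x m -> exists v : Mob M x, phi x v = m) /\
    (forall x y (f : HomE E x y) (v : Mob M x),
        phi y (act M f v) = ev_act C f (phi x v)).
Arguments iso_Ups {k E} M C.
Set Implicit Arguments.

(* Main.v *)
Require Import Defs.
From HB Require Import structures.
From mathcomp Require Import all_boot all_algebra.
From mathcomp Require Import boolp.
From Stdlib Require List.
Set Implicit Arguments.
Unset Strict Implicit.
Import GRing.Theory.
Local Open Scope ring_scope.

Section LinFun.
Variables (k : fieldType) (V W : lmodType k) (g : V -> W).
Hypothesis glin : forall a u v, g (a *: u + v) = a *: g u + g v.
Lemma glin0 : g 0 = 0.
Proof.
have h := glin (-1) 0 0.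
by move: h; rewrite scaler0 add0r scaleN1r addNr.
Qed.
Lemma glinZ a u : g (a *: u) = a *: g u.
Proof. by have := glin a u 0; rewrite addr0 glin0 addr0. Qed.
Lemma glinD u v : g (u + v) = g u + g v.
Proof. by have := glin 1 u v; rewrite !scale1r. Qed.
Lemma glin_sum (I : Type) (r : seq I) (F : I -> V) :
  g (\sum_(i <- r) F i) = \sum_(i <- r) g (F i).
Proof.
apply: (big_rec2 (fun a b => g a = b)); first exact: glin0.
by move=> i y1 y2 _ <-; rewrite glinD.
Qed.
End LinFun.

Lemma in_List (T : eqType) (x : T) (s : seq T) : x \in s -> List.In x s.
Proof.
elim: s => //= a s IH; rewrite in_cons => /orP [/eqP ->|h]; [by left|by right; apply IH].
Qed.

Section DS.
Variables (k : fieldType) (E : klinCat k) (M : lfModule E).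

Definition finsup (f : forall x, Mob M x) :=
  exists s : seq (Obj E), forall x, f x != 0 -> List.In x s.

Record dsum := DSum { dfun :> forall x, Mob M x; dfin : finsup dfun }.

Lemma dsum_ext (a b : dsum) : (forall x, a x = b x) -> a = b.
Proof.
case: a b => [f hf] [g hg] /= H.
have e : f = g by apply: functional_extensionality_dep.
subst; congr DSum; apply: Prop_irrelevance.
Qed.

HB.instance Definition _ := gen_eqMixin dsum.
HB.instance Definition _ := gen_choiceMixin dsum.

Lemma fin0 : finsup (fun x => 0).
Proof. by exists nil => x; rewrite eqxx. Qed.
Definition dzero := DSum fin0.

Lemma finadd (a b : dsum) : finsup (fun x => a x + b x).
Proof.
case: (dfin a) => s1 h1; case: (dfin b) => s2 h2.
exists (s1 ++ s2) => x hx; apply List.in_or_app.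
have [a0|a0] := eqVneq (a x) 0; last by left; apply h1.
right; apply h2; by move: hx; rewrite a0 add0r.
Qed.
Definition dadd (a b : dsum) := DSum (finadd a b).

Lemma finopp (a : dsum) : finsup (fun x => - a x).
Proof.
case: (dfin a) => s h; exists s => x hx; apply h; by rewrite -oppr_eq0.
Qed.
Definition dopp (a : dsum) := DSum (finopp a).

Lemma finscale c (a : dsum) : finsup (fun x => c *: a x).
Proof.
case: (dfin a) => s h; exists s => x hx; apply h.
apply/eqP => e; move: hx; by rewrite e scaler0 eqxx.
Qed.
Definition dscale c (a : dsum) := DSum (finscale c a).

Lemma daddA : associative dadd.
Proof. by move=> a b c; apply: dsum_ext => x /=; rewrite addrA. Qed.
Lemma daddC : commutative dadd.
Proof. by move=> a b; apply: dsum_ext => x /=; rewrite addrC. Qed.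
Lemma dadd0 : left_id dzero dadd.
Proof. by move=> a; apply: dsum_ext => x /=; rewrite add0r. Qed.
Lemma daddN : left_inverse dzero dopp dadd.
Proof. by move=> a; apply: dsum_ext => x /=; rewrite addNr. Qed.

HB.instance Definition _ := GRing.isZmodule.Build dsum daddA daddC dadd0 daddN.

Lemma dscaleA a b v : dscale a (dscale b v) = dscale (a * b) v.
Proof. by apply: dsum_ext => x /=; rewrite scalerA. Qed.
Lemma dscale1 : left_id 1 dscale.
Proof. by move=> v; apply: dsum_ext => x /=; rewrite scale1r. Qed.
Lemma dscaleDr : right_distributive dscale +%R.
Proof. by move=> a u v; apply: dsum_ext => x /=; rewrite scalerDr. Qed.
Lemma dscaleDl v : {morph dscale^~ v: a b / a + b}.
Proof. by move=> a b; apply: dsum_ext => x /=; rewrite scalerDl. Qed.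

HB.instance Definition _ := GRing.Zmodule_isLmodule.Build k dsum
  dscaleA dscale1 dscaleDr dscaleDl.

Lemma dsum_sum (I : Type) (r : seq I) (F : I -> dsum) z :
  (\sum_(i <- r) F i : dsum) z = \sum_(i <- r) F i z.
Proof.
apply: (big_rec2 (fun (a : dsum) b => a z = b)) => //.
by move=> i y1 y2 _ <-.
Qed.

Definition eqO (x y : Obj E) : {x = y} + {x <> y} := pselect (x = y).

Definition inj (y : Obj E) (v : Mob M y) : forall z, Mob M z :=
  fun z => match eqO y z with left e => eq_rect y (Mob M) v z e | right _ => 0 end.

Lemma inj_self y v : inj v y = v.
Proof. by rewrite /inj; case: eqO => [e|//]; rewrite (Prop_irrelevance e erefl). Qed.
Lemma inj_ne y z (v : Mob M y) : y <> z -> inj v z = 0.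
Proof. by rewrite /inj; case: eqO. Qed.
Lemma inj_lin y a (u v : Mob M y) z : inj (a *: u + v) z = a *: inj u z + inj v z.
Proof. rewrite /inj; case: eqO => [e|_]; [by case: z / e | by rewrite scaler0 addr0]. Qed.

Lemma inj_fin y (v : Mob M y) : finsup (inj v).
Proof.
exists [:: y] => z; rewrite /inj; case: eqO => [e|]; [by left|by rewrite eqxx].
Qed.
Definition DI y (v : Mob M y) : dsum := DSum (inj_fin v).

Lemma DI0 y : DI (0 : Mob M y) = 0.
Proof.
apply: dsum_ext => z /=.
by rewrite /inj; case: eqO => // e; case: z / e.
Qed.

End DS.


Section Constr.
Variables (k : fieldType) (E : klinCat k) (M : lfModule E).
Variable S : Obj E -> seq (Obj E).
Hypothesis HS : forall x y : Obj E,
  (exists (f : HomE E x y) (v : Mob M x), act M f v != 0) -> List.In y (S x).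

Definition dco (x y : Obj E) (m : dsum M) (f : HomE E x y) : dsum M :=
  DI (act M f (m x)).

Lemma act0 x y (f : HomE E x y) : act M f 0 = 0.
Proof. exact: (@glin0 k _ _ (act M f) (@act_linr _ _ M _ _ f)). Qed.

Lemma dco_linl x y (f : HomE E x y) a (m1 m2 : dsum M) :
  dco (a *: m1 + m2) f = a *: dco m1 f + dco m2 f.
Proof. apply: dsum_ext => z /=; by rewrite act_linr inj_lin. Qed.

Lemma dco_linr x y (m : dsum M) a (f1 f2 : HomE E x y) :
  dco m (a *: f1 + f2) = a *: dco m f1 + dco m f2.
Proof. apply: dsum_ext => z /=; by rewrite act_linl inj_lin. Qed.

Lemma dco_fin (m : dsum M) : exists s : seq (Obj E * Obj E),
  forall x y (f : HomE E x y), dco m f != 0 -> List.In (x, y) s.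
Proof.
case: (dfin m) => s hs.
exists (List.flat_map (fun x => map (fun y => (x, y)) (S x)) s) => x y f hf.
apply/List.in_flat_map; exists x.
have hact : act M f (m x) != 0.
  by apply/eqP => e; move: hf; rewrite /dco e DI0 eqxx.
split.
  apply: hs; apply/eqP => e; move: hact; by rewrite e act0 eqxx.
apply: List.in_map; apply: HS; by exists f, (m x).
Qed.

Lemma sum_inj (m : dsum M) (xs : seq (Obj E)) z : List.NoDup xs ->
  (List.In z xs -> \sum_(x <- xs) inj (m x) z = m z) /\
  (~ List.In z xs -> \sum_(x <- xs) inj (m x) z = 0).
Proof.
elim: xs => [|a l IH] nd; first by split => //; rewrite big_nil.
move: nd => /List.NoDup_cons_iff [nal ndl]; have [IH1 IH2] := IH ndl.
rewrite big_cons; split.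
  move=> [e|hz]; first by subst; rewrite inj_self IH2 // addr0.
  rewrite inj_ne ?add0r ?IH1 // => e; subst; exact: nal.
move=> hz; rewrite inj_ne ?add0r ?IH2 //.
  by move=> h; apply: hz; right.
by move=> e; apply: hz; left.
Qed.

Lemma dco_counit (m : dsum M) : exists xs : seq (Obj E),
  List.NoDup xs /\
  (forall x, dco m (idm E x) != 0 -> List.In x xs) /\
  m = \sum_(x <- xs) dco m (idm E x).
Proof.
case: (dfin m) => s hs.
exists (List.nodup (@eqO k E) s); split; first exact: List.NoDup_nodup.
split.
  move=> x hx; apply/List.nodup_In; apply: hs; apply/eqP => e.
  by move: hx; rewrite /dco e act0 DI0 eqxx.
apply: dsum_ext => z; rewrite dsum_sum.
have [H1 H2] := sum_inj m z (List.NoDup_nodup (@eqO k E) s).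
have -> : \sum_(x <- List.nodup (@eqO k E) s) dco m (idm E x) z =
          \sum_(x <- List.nodup (@eqO k E) s) inj (m x) z.
  by apply: eq_bigr => x _ /=; rewrite act_id.
case: (pselect (List.In z (List.nodup (@eqO k E) s))) => hz.
  by rewrite H1.
rewrite H2 //; case: (eqVneq (m z) 0) => // hne; exfalso; apply: hz.
by apply/List.nodup_In; apply: hs.
Qed.

Lemma dco_coassoc x z y (m : dsum M) (g : HomE E x z) (h : HomE E z y) :
  dco (dco m g) h = dco m (Defs.comp E h g).
Proof. apply: dsum_ext => w /=; by rewrite inj_self act_comp. Qed.

Lemma dco_coassoc0 x z z' y (m : dsum M) (g : HomE E x z) (h : HomE E z' y) :
  z <> z' -> dco (dco m g) h = 0.
Proof. move=> ne; rewrite /dco /= inj_ne // act0; exact: DI0. Qed.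

Definition theC : comodule E :=
  @Comodule k E (dsum M) dco dco_linl dco_linr dco_fin dco_counit
    dco_coassoc dco_coassoc0.

Lemma theC_iso : iso_Ups M theC.
Proof.
exists (fun x v => DI v); split.
  by move=> x a u v; apply: dsum_ext => z /=; rewrite inj_lin.
split.
  move=> x u v e; have := congr1 (fun m : dsum M => m x) e; by rewrite /= !inj_self.
split.
  move=> x v; exists (DI v); apply: dsum_ext => z /=; by rewrite inj_self act_id.
split.
  by move=> x m [m' ->]; exists (act M (idm E x) (m' x)).
move=> x y f v; apply: dsum_ext => z /=; by rewrite inj_self.
Qed.

End Constr.

Theorem theorem2p7 (k : fieldType) (E : klinCat k) (M : lfModule E) :
  lf_cat E ->
  ((exists C : comodule E, iso_Ups M C) <->
   (forall x : Obj E, exists s : seq (Obj E),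
      forall y : Obj E,
        (exists (f : HomE E x y) (v : Mob M x), act M f v != 0) -> List.In y s)).
Proof.
move=> _; split.
  move=> [C [phi [hlin [hinj [hups [hsurj hnat]]]]]] x.
  pose F m := projT1 (cid (@coact_fin _ _ C m)).
  have HF m : forall x y (f : HomE E x y), coact C m f != 0 -> List.In (x, y) (F m).
    exact: (projT2 (cid (@coact_fin _ _ C m))).
  pose B := vbasis (fullv : {vspace Mob M x}).
  exists (List.flat_map (fun b => map snd (F (phi x b))) (tval B)).
  move=> y [f [v hne]].
  have [[i hi]|nob] := pselect (exists i : 'I_(\dim (fullv : {vspace Mob M x})),
                                   act M f B`_i != 0); last first.
    exfalso; move/eqP: hne; apply.
    rewrite (coord_vbasis (memvf v)) (glin_sum (@act_linr _ _ M _ _ f)).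
    apply: big1 => i _; rewrite (glinZ (@act_linr _ _ M _ _ f)).
    case: (eqVneq (act M f B`_i) 0) => [->|h]; first by rewrite scaler0.
    by exfalso; apply: nob; exists i.
  have hphi : phi y (act M f B`_i) != 0.
    apply/eqP => e; move/eqP: hi; apply; apply: (hinj y).
    by rewrite e (glin0 (hlin y)).
  move: hphi; rewrite hnat /ev_act => /HF hin.
  apply/List.in_flat_map; exists B`_i; split.
    by apply: in_List; apply: mem_nth; rewrite size_tuple.
  exact: (List.in_map snd _ _ hin).
move=> H.
pose S x := projT1 (cid (H x)).
have HS : forall x y : Obj E,
  (exists (f : HomE E x y) (v : Mob M x), act M f v != 0) -> List.In y (S x).
  move=> x; exact: (projT2 (cid (H x))).
by exists (theC HS); exact: theC_iso.
Qed.
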